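(* Let $G$ act on the CAT(0) cube complex $X$ by automorphisms non-transversely, and let $\gamma$ be a segment. Then for all vertices $x,y,z$ of $X$, $$\left|\omega_{\gamma}(x,y)+\omega_{\gamma}(y,z)+\omega_{\gamma}(z,x)\right|\le 6.$$
   Context: $\mathcal{H}(X)$ is the set of halfspaces of $X$, $\overline\Phi$ the complement of $\Phi$. Two halfspaces are nested if one of $\Phi\subseteq\Psi$, $\overline{\Phi}\subseteq\Psi$, $\Phi\subseteq\overline{\Psi}$, $\overline{\Phi}\subseteq\overline{\Psi}$ holds, transverse otherwise; the action is non-transverse if there are no $\Phi\in\mathcal H(X)$, $h\in G$ with $\Phi$ and $h\Phi$ transverse. $\Phi\supsetneq\Psi$ tightly means $\Phi\supsetneq\Psi$ and no halfspace $\Phi'$ satisfies $\Phi\supsetneq\Phi'\supsetneq\Psi$. For vertices $x,y$, $[x,y]=\{\Phi\in\mathcal H(X): x\notin\Phi,\ y\in\Phi\}$. A segment is a finite sequence $\gamma=(\Phi_0,\dots,\Phi_r)$, $r\ge0$, of halfspaces with $\Phi_i\supsetneq\Phi_{i+1}$ tightly; its reverse is $\overline\gamma=(\overline\Phi_r,\dots,\overline\Phi_0)$. Two segments overlap if some halfspace of one is equal or transverse to some halfspace of the other. A segment is in $[x,y]$ if all its halfspaces lie in $[x,y]$. Copies of $\gamma$ are the segments $h\gamma$, $h\in G$. $c_\gamma(x,y)$ is the largest cardinality of a set of pairwise non-overlapping copies of $\gamma$ all lying in $[x,y]$, and $\omega_\gamma(x,y)=c_\gamma(x,y)-c_{\overline\gamma}(x,y)$.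 *)

(* Defs.v *)
(* A CAT(0) cube complex X is represented by its 1-skeleton,
   which (Chepoi, Roller, Gerasimov) is exactly a median graph; vertices of X
   are the vertices of the graph, halfspaces of X are (as sets of vertices) the
   sets W(a,b) = {v | d(v,b) < d(v,a)} for edges ab, and automorphisms of X
   are the graph automorphisms. *)
From Stdlib Require Import List Arith ZArith.
Import ListNotations.

Section Defs.
Variable V : Type.
Variable adj : V -> V -> Prop.

Inductive walk : V -> V -> nat -> Prop :=
| walk_nil : forall x, walk x x 0
| walk_cons : forall x y z n, adj x y -> walk y z n -> walk x z (S n).

Definition gdist (x y : V) (n : nat) : Prop :=
  walk x y n /\ forall m, walk x y m -> n <= m.

Definition between (x m y : V) : Prop :=
  exists a b c, gdist x m a /\ gdist m y b /\ gdist x y c /\ a + b = c.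

Definition median_graph : Prop :=
  (forall x, ~ adj x x) /\
  (forall x y, adj x y -> adj y x) /\
  (forall x y, exists n, walk x y n) /\
  (forall x y z, exists m,
      (between x m y /\ between y m z /\ between z m x) /\
      forall m', between x m' y /\ between y m' z /\ between z m' x -> m' = m).

Definition vset := V -> Prop.
Definition subset (A B : vset) : Prop := forall v, A v -> B v.
Definition seteq (A B : vset) : Prop := subset A B /\ subset B A.
Definition compl (A : vset) : vset := fun v => ~ A v.
Definition ssubset (A B : vset) : Prop := subset A B /\ ~ subset B A.

Definition is_halfspace (P : vset) : Prop :=
  exists a b, adj a b /\
    forall v, P v <-> exists da db, gdist v a da /\ gdist v b db /\ db < da.

Definition nested (P Q : vset) : Prop :=
  subset P Q \/ subset (compl P) Q \/ subset P (compl Q) \/ subset (compl P) (compl Q).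
Definition transverse (P Q : vset) : Prop := ~ nested P Q.

Definition tightly_contains (P Q : vset) : Prop :=
  ssubset Q P /\ ~ exists P', is_halfspace P' /\ ssubset P' P /\ ssubset Q P'.

Fixpoint chain (l : list vset) : Prop :=
  match l with
  | P :: ((Q :: _) as l') => tightly_contains P Q /\ chain l'
  | _ => True
  end.
Definition is_segment (g : list vset) : Prop :=
  g <> [] /\ (forall P, In P g -> is_halfspace P) /\ chain g.

Definition seg_rev (g : list vset) : list vset := map compl (rev g).

Definition overlap (g1 g2 : list vset) : Prop :=
  exists P Q, In P g1 /\ In Q g2 /\ (seteq P Q \/ transverse P Q).

Definition in_interval (x y : V) (P : vset) : Prop :=
  is_halfspace P /\ ~ P x /\ P y.
Definition seg_in (x y : V) (g : list vset) : Prop :=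
  forall P, In P g -> in_interval x y P.

End Defs.

Record group := Group {
  gcar :> Type;
  gmul : gcar -> gcar -> gcar;
  gone : gcar;
  ginv : gcar -> gcar;
  gmulA : forall a b c, gmul a (gmul b c) = gmul (gmul a b) c;
  gmul1 : forall a, gmul gone a = a;
  gmulV : forall a, gmul (ginv a) a = gone
}.

Definition action_by_automorphisms (G : group) (V : Type) (adj : V -> V -> Prop)
  (act : G -> V -> V) : Prop :=
  (forall v, act (gone G) v = v) /\
  (forall g h v, act (gmul G g h) v = act g (act h v)) /\
  (forall g u v, adj u v <-> adj (act g u) (act g v)).

Section Act.
Variables (G : group) (V : Type) (act : G -> V -> V).

Definition hs_act (h : G) (P : vset V) : vset V :=
  fun v => exists u, P u /\ act h u = v.
Definition seg_act (h : G) (g : list (vset V)) : list (vset V) :=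
  map (hs_act h) g.

Definition non_transverse (adj : V -> V -> Prop) : Prop :=
  ~ exists (P : vset V) (h : G), is_halfspace V adj P /\ transverse V P (hs_act h P).

Definition copies_count (adj : V -> V -> Prop) (g : list (vset V)) (x y : V)
  (k : nat) : Prop :=
  exists f : nat -> G,
    (forall i, i < k -> seg_in V adj x y (seg_act (f i) g)) /\
    (forall i j, i < j -> j < k -> ~ overlap V (seg_act (f i) g) (seg_act (f j) g)).

Definition is_c (adj : V -> V -> Prop) (g : list (vset V)) (x y : V) (k : nat) : Prop :=
  copies_count adj g x y k /\ forall m, copies_count adj g x y m -> m <= k.
End Act.

Arguments is_c {G V} act adj g x y k.
Arguments non_transverse {G V} act adj.

(* Main.v *)
Require Import Defs.
From Stdlib Require Import List Arith ZArith Lia.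
From Stdlib Require Import Classical ClassicalEpsilon FunctionalExtensionality PropExtensionality.
Import ListNotations.

Section Main.
Variables (V : Type) (adj : V -> V -> Prop) (G : group) (act : G -> V -> V).
Hypothesis HX : median_graph V adj.
Hypothesis Hact : action_by_automorphisms G V adj act.

Lemma adj_sym x y : adj x y -> adj y x.
Proof. destruct HX as [_ [H _]]; auto. Qed.

Lemma walk_snoc x y z n : walk V adj x y n -> adj y z -> walk V adj x z (S n).
Proof.
  induction 1; intros.
  - apply walk_cons with z; [assumption | constructor].
  - apply walk_cons with y; auto.
Qed.

Lemma walk_rev x y n : walk V adj x y n -> walk V adj y x n.
Proof.
  induction 1. constructor.
  apply walk_snoc with y; auto using adj_sym.
Qed.

Lemma gdist_sym x y n : gdist V adj x y n -> gdist V adj y x n.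
Proof.
  intros [H1 H2]; split; [apply walk_rev; auto|].
  intros m Hm; apply H2, walk_rev; auto.
Qed.

Lemma gdist_unique x y n m : gdist V adj x y n -> gdist V adj x y m -> n = m.
Proof.
  intros [H1 H2] [H3 H4]. specialize (H2 _ H3). specialize (H4 _ H1). lia.
Qed.

Lemma gdist_exists x y : exists n, gdist V adj x y n.
Proof.
  destruct HX as [_ [_ [Hc _]]]. destruct (Hc x y) as [n Hn].
  revert Hn. induction n as [n IH] using lt_wf_ind. intros Hn.
  destruct (classic (exists m, m < n /\ walk V adj x y m)) as [[m [Hm Hw]] | Hno].
  - apply (IH m); auto.
  - exists n; split; auto. intros m Hm.
    destruct (le_lt_dec n m); auto. exfalso; apply Hno; eauto.
Qed.

Lemma walk0 x y : walk V adj x y 0 -> x = y.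
Proof. intros H; inversion H; auto. Qed.

Lemma gdist_adj a b : adj a b -> gdist V adj a b 1.
Proof.
  intros H. split.
  - apply walk_cons with b; auto. constructor.
  - intros m Hm. destruct m; [|lia]. apply walk0 in Hm; subst.
    destruct HX as [Hirr _]. exfalso; apply (Hirr b); auto.
Qed.

Lemma bipartite a b v k : adj a b -> gdist V adj v a k -> gdist V adj v b k -> False.
Proof.
  intros Hab Ha Hb.
  destruct HX as [_ [_ [_ Hmed]]].
  destruct (Hmed a b v) as [m [[H1 [H2 H3]] _]].
  destruct H1 as [p [q [c [Hp [Hq [Hc Hpq]]]]]].
  assert (c = 1) by (eapply gdist_unique; eauto using gdist_adj). subst c.
  destruct p.
  - apply proj1, walk0 in Hp. subst m.
    destruct H2 as [q1 [r1 [c1 [Hq1 [Hr1 [Hc1 Hs]]]]]].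
    assert (q1 = 1) by (eapply gdist_unique; eauto using gdist_adj, adj_sym).
    assert (r1 = k) by (eapply gdist_unique; eauto using gdist_sym).
    assert (c1 = k) by (eapply gdist_unique; eauto using gdist_sym).
    lia.
  - assert (q = 0) by lia. subst q. apply proj1, walk0 in Hq. subst m.
    destruct H3 as [q1 [r1 [c1 [Hq1 [Hr1 [Hc1 Hs]]]]]].
    assert (q1 = k) by (eapply gdist_unique; eauto).
    assert (r1 = 1) by (eapply gdist_unique; eauto using gdist_adj, adj_sym).
    assert (c1 = k) by (eapply gdist_unique; eauto).
    lia.
Qed.

Lemma pext (P Q : vset V) : (forall v, P v <-> Q v) -> P = Q.
Proof.
  intros H. apply functional_extensionality; intros v.
  apply propositional_extensionality; auto.
Qed.

Lemma compl_compl P : compl V (compl V P) = P.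
Proof. apply pext; intros v; unfold compl; split; [apply NNPP|tauto]. Qed.

Lemma hs_compl P : is_halfspace V adj P -> is_halfspace V adj (compl V P).
Proof.
  intros [a [b [Hab HP]]]. exists b, a. split; [apply adj_sym; auto|].
  intros v. unfold compl. rewrite HP.
  destruct (gdist_exists v a) as [da Ha], (gdist_exists v b) as [db Hb].
  assert (da <> db) by (intro; subst; eapply bipartite; eauto).
  split.
  - intros Hn. exists db, da. split; [auto|split; [auto|]].
    destruct (lt_dec db da); [|lia]. exfalso; apply Hn; exists da, db; auto.
  - intros [db' [da' [Hb' [Ha' Hlt]]]] [da'' [db'' [Ha'' [Hb'' Hlt']]]].
    assert (da' = da) by (eapply gdist_unique; eauto).
    assert (da'' = da) by (eapply gdist_unique; eauto).
    assert (db' = db) by (eapply gdist_unique; eauto).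
    assert (db'' = db) by (eapply gdist_unique; eauto).
    lia.
Qed.

Lemma hs_compl_iff P : is_halfspace V adj (compl V P) <-> is_halfspace V adj P.
Proof.
  split; [|apply hs_compl]. intros H. rewrite <- (compl_compl P). apply hs_compl; auto.
Qed.

Lemma act1 v : act (gone G) v = v.
Proof. destruct Hact as [H _]; auto. Qed.
Lemma actM g h v : act (gmul G g h) v = act g (act h v).
Proof. destruct Hact as [_ [H _]]; auto. Qed.
Lemma act_adj g u v : adj u v <-> adj (act g u) (act g v).
Proof. destruct Hact as [_ [_ H]]; auto. Qed.
Lemma act_inv_l h v : act (ginv G h) (act h v) = v.
Proof. rewrite <- actM, gmulV, act1; auto. Qed.
Lemma act_inj h u v : act h u = act h v -> u = v.
Proof. intros H. rewrite <- (act_inv_l h u), <- (act_inv_l h v), H; auto. Qed.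
Lemma act_inv_r h v : act h (act (ginv G h) v) = v.
Proof. apply act_inj with (ginv G h). rewrite act_inv_l; auto. Qed.

Lemma walk_act h u w n : walk V adj u w n -> walk V adj (act h u) (act h w) n.
Proof.
  induction 1. constructor. apply walk_cons with (act h y); auto. apply act_adj; auto.
Qed.

Lemma gdist_act h v a d : gdist V adj (act h v) (act h a) d <-> gdist V adj v a d.
Proof.
  split.
  - intros [H1 H2]. split.
    + apply walk_act with (h := ginv G h) in H1. rewrite !act_inv_l in H1; auto.
    + intros m Hm. apply H2, walk_act; auto.
  - intros [H1 H2]. split.
    + apply walk_act; auto.
    + intros m Hm. apply H2. apply walk_act with (h := ginv G h) in Hm.
      rewrite !act_inv_l in Hm; auto.
Qed.

Lemma hs_act_hs h P : is_halfspace V adj P -> is_halfspace V adj (hs_act G V act h P).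
Proof.
  intros [a [b [Hab HP]]]. exists (act h a), (act h b). split; [apply act_adj; auto|].
  intros v. unfold hs_act. split.
  - intros [u [Hu Huv]]; subst v. apply HP in Hu.
    destruct Hu as [da [db [Ha [Hb Hlt]]]]. exists da, db.
    rewrite !gdist_act; auto.
  - intros [da [db [Ha [Hb Hlt]]]]. exists (act (ginv G h) v). split; [|apply act_inv_r].
    apply HP. exists da, db.
    rewrite <- (act_inv_r h v) in Ha, Hb. rewrite gdist_act in Ha, Hb. auto.
Qed.

Lemma hs_act_comp h k P : hs_act G V act h (hs_act G V act k P) = hs_act G V act (gmul G h k) P.
Proof.
  apply pext; intros v; unfold hs_act; split.
  - intros [u [[w [Hw Hwu]] Huv]]. exists w; split; auto. rewrite actM; subst; auto.
  - intros [w [Hw Hwv]]. exists (act k w). split; [exists w; auto|]. rewrite <- actM; auto.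
Qed.

Lemma hs_act_one P : hs_act G V act (gone G) P = P.
Proof.
  apply pext; intros v; unfold hs_act; split.
  - intros [u [Hu Huv]]; rewrite act1 in Huv; subst; auto.
  - intros Hv; exists v; rewrite act1; auto.
Qed.

Lemma hs_act_inv h P : hs_act G V act (ginv G h) (hs_act G V act h P) = P.
Proof. rewrite hs_act_comp, gmulV, hs_act_one; auto. Qed.

Lemma hs_act_compl h P : hs_act G V act h (compl V P) = compl V (hs_act G V act h P).
Proof.
  apply pext; intros v; unfold hs_act, compl; split.
  - intros [u [Hu Huv]] [u' [Hu' Hu'v]]. subst v. apply act_inj in Hu'v. subst; auto.
  - intros Hn. exists (act (ginv G h) v). split; [|apply act_inv_r].
    intros Hp. apply Hn. exists (act (ginv G h) v); split; auto; apply act_inv_r.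
Qed.

Lemma subset_act h P Q : subset V P Q -> subset V (hs_act G V act h P) (hs_act G V act h Q).
Proof. intros H v [u [Hu Huv]]. exists u; auto. Qed.

Lemma subset_act_rev h P Q : subset V (hs_act G V act h P) (hs_act G V act h Q) -> subset V P Q.
Proof.
  intros H. apply subset_act with (h := ginv G h) in H. rewrite !hs_act_inv in H; auto.
Qed.

Lemma ssubset_act h P Q : ssubset V P Q -> ssubset V (hs_act G V act h P) (hs_act G V act h Q).
Proof.
  intros [H1 H2]. split. apply subset_act; auto. intros H; apply H2; eapply subset_act_rev; eauto.
Qed.

Lemma tight_act h P Q : tightly_contains V adj P Q ->
  tightly_contains V adj (hs_act G V act h P) (hs_act G V act h Q).
Proof.
  intros [Hs Hno]. split. apply ssubset_act; auto.
  intros [P' [HP' [H1 H2]]]. apply Hno. exists (hs_act G V act (ginv G h) P').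
  split; [apply hs_act_hs; auto|]. split.
  - rewrite <- (hs_act_inv h P). apply ssubset_act; auto.
  - rewrite <- (hs_act_inv h Q). apply ssubset_act; auto.
Qed.


Lemma ssubset_trans A B C : ssubset V A B -> ssubset V B C -> ssubset V A C.
Proof.
  intros [H1 H2] [H3 H4]. split. intros v Hv; auto.
  intros H. apply H2. intros v Hv. apply H, H3; auto.
Qed.
Lemma ssubset_asym A B : ssubset V A B -> ssubset V B A -> False.
Proof. intros [H1 H2] [H3 H4]. auto. Qed.

Lemma subset_compl P Q : subset V (compl V P) (compl V Q) <-> subset V Q P.
Proof.
  unfold subset, compl. split; intros H v Hv.
  - apply NNPP; intro Hn; apply (H v Hn); auto.
  - intro Hq; apply Hv, H; auto.
Qed.

Lemma nested_compl P Q : nested V (compl V P) (compl V Q) <-> nested V P Q.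
Proof. unfold nested. rewrite !compl_compl. tauto. Qed.

Lemma seteq_compl P Q : seteq V (compl V P) (compl V Q) <-> seteq V P Q.
Proof. unfold seteq. rewrite !subset_compl. tauto. Qed.

Lemma nested_sym P Q : nested V P Q -> nested V Q P.
Proof.
  unfold nested, subset, compl. intros [H|[H|[H|H]]].
  - right; right; right. intros v Hq Hp; apply Hq, H; auto.
  - right; left. intros v Hq. apply NNPP; intros Hp. apply Hq, H; auto.
  - right; right; left. intros v Hq Hp. apply (H v Hp); auto.
  - left. intros v Hq. apply NNPP; intros Hp. apply (H v Hp); auto.
Qed.

Lemma overlap_sym g1 g2 : overlap V g1 g2 -> overlap V g2 g1.
Proof.
  intros [P [Q [H1 [H2 H3]]]]. exists Q, P. split; auto. split; auto.
  destruct H3 as [[Ha Hb] | Ht]; [left; split; auto | right].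
  intros Hn; apply Ht, nested_sym; auto.
Qed.

Variable Hnt : non_transverse act adj.
Variable gam : list (vset V).
Hypothesis Hgam : is_segment V adj gam.

Definition dflt : vset V := fun _ => False.
Definition E h i := hs_act G V act h (nth i gam dflt).
Definition n := length gam.

Lemma chain_nth l i : chain V adj l -> S i < length l ->
  tightly_contains V adj (nth i l dflt) (nth (S i) l dflt).
Proof.
  revert i. induction l as [|a l IH]; intros i Hc Hi; simpl in Hi; [lia|].
  destruct l as [|b l']; simpl in Hi; [lia|].
  destruct Hc as [Hab Hc]. destruct i; simpl; auto.
  apply (IH i Hc). simpl; lia.
Qed.

Lemma E_tight h i : S i < n -> tightly_contains V adj (E h i) (E h (S i)).
Proof.
  intros Hi. unfold E. apply tight_act. apply chain_nth; auto. apply Hgam.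
Qed.

Lemma E_mono h i j : i < j -> j < n -> ssubset V (E h j) (E h i).
Proof.
  induction j; intros Hij Hj; [lia|].
  destruct (Nat.eq_dec i j) as [->|Hne].
  - apply E_tight; auto.
  - apply ssubset_trans with (E h j); [apply E_tight; auto | apply IHj; lia].
Qed.

Lemma E_hs h i : i < n -> is_halfspace V adj (E h i).
Proof.
  intros Hi. unfold E. apply hs_act_hs. apply Hgam. apply nth_In. auto.
Qed.

Lemma orbit h1 h2 i : i < n -> nested V (E h1 i) (E h2 i).
Proof.
  intros Hi. apply NNPP. intros Hn. apply Hnt.
  exists (E h1 i), (gmul G h2 (ginv G h1)). split; [apply E_hs; auto|].
  unfold E. rewrite hs_act_comp.
  replace (hs_act G V act (gmul G (gmul G h2 (ginv G h1)) h1) (nth i gam dflt))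
    with (hs_act G V act h2 (nth i gam dflt)); auto.
  rewrite <- gmulA, gmulV.
  apply pext; intros v; unfold hs_act; split; intros [u [Hu Huv]]; exists u; split; auto;
    rewrite ?actM, ?act1 in *; auto.
Qed.

Lemma In_seg_act h P : In P (seg_act G V act h gam) <-> exists i, i < n /\ P = E h i.
Proof.
  unfold seg_act, E, n. split.
  - intros Hin. destruct (In_nth _ _ (hs_act G V act h dflt) Hin) as [i [Hi Heq]].
    rewrite length_map in Hi. exists i. split; auto. rewrite <- Heq.
    rewrite map_nth; auto.
  - intros [i [Hi ->]]. apply in_map. apply nth_In; auto.
Qed.

Definition I x y := in_interval V adj x y.

Lemma comparable x y P Q : I x y P -> I x y Q -> nested V P Q ->
  subset V P Q \/ subset V Q P.
Proof.
  intros [_ [HPx HPy]] [_ [HQx HQy]] [H|[H|[H|H]]].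
  - left; auto.
  - exfalso. apply HQx, H; auto.
  - exfalso. apply (H y HPy); auto.
  - right. apply subset_compl; auto.
Qed.

Lemma strict x y P Q : I x y P -> I x y Q -> nested V P Q -> ~ seteq V P Q ->
  ssubset V P Q \/ ssubset V Q P.
Proof.
  intros H1 H2 H3 H4. destruct (comparable x y P Q H1 H2 H3) as [H|H].
  - left. split; auto. intros H'; apply H4; split; auto.
  - right. split; auto. intros H'; apply H4; split; auto.
Qed.

Lemma nested_of_subset P Q : subset V Q P -> nested V P Q.
Proof. intros H. right; right; right. apply subset_compl; auto. Qed.

Definition NO h1 h2 := ~ overlap V (seg_act G V act h1 gam) (seg_act G V act h2 gam).

Lemma NO_elim h1 h2 i j : NO h1 h2 -> i < n -> j < n ->
  nested V (E h1 i) (E h2 j) /\ ~ seteq V (E h1 i) (E h2 j).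
Proof.
  intros H Hi Hj. split.
  - apply NNPP; intros Hn; apply H. exists (E h1 i), (E h2 j).
    split; [apply In_seg_act; eauto|]. split; [apply In_seg_act; eauto|]. right; auto.
  - intros Hs; apply H. exists (E h1 i), (E h2 j).
    split; [apply In_seg_act; eauto|]. split; [apply In_seg_act; eauto|]. left; auto.
Qed.

Lemma overlap_elim h1 h2 : overlap V (seg_act G V act h1 gam) (seg_act G V act h2 gam) ->
  exists i j, i < n /\ j < n /\ (seteq V (E h1 i) (E h2 j) \/ transverse V (E h1 i) (E h2 j)).
Proof.
  intros [P [Q [HP [HQ H]]]]. apply In_seg_act in HP, HQ.
  destruct HP as [i [Hi ->]], HQ as [j [Hj ->]]. exists i, j; auto.
Qed.

Lemma NO_sym h1 h2 : NO h1 h2 -> NO h2 h1.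
Proof. intros H Ho; apply H, overlap_sym; auto. Qed.


Lemma FOP_filter {A} (R : A -> A -> Prop) (p : A -> bool) l :
  ForallOrdPairs R l -> ForallOrdPairs R (filter p l).
Proof.
  induction 1; simpl; [constructor|].
  destruct (p a); auto. constructor; auto.
  rewrite Forall_forall in *. intros x Hx. apply filter_In in Hx. apply H; tauto.
Qed.

Lemma FOP_app {A} (R : A -> A -> Prop) l1 l2 :
  ForallOrdPairs R l1 -> ForallOrdPairs R l2 ->
  (forall a b, In a l1 -> In b l2 -> R a b) -> ForallOrdPairs R (l1 ++ l2).
Proof.
  induction 1; intros H2 H3; simpl; auto.
  constructor.
  - apply Forall_app; split; auto. rewrite Forall_forall. intros b Hb. apply H3; simpl; auto.
  - apply IHForallOrdPairs; auto. intros a' b Ha Hb; apply H3; simpl; auto.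
Qed.

Lemma at_most_one {A} (R : A -> A -> Prop) l :
  (forall a b, In a l -> In b l -> R a b -> False) -> ForallOrdPairs R l -> length l <= 1.
Proof.
  intros H Hf. destruct l as [|a [|b l]]; simpl; try lia.
  inversion Hf; subst. inversion H2; subst. exfalso; apply (H a b); simpl; auto.
Qed.

Lemma len3 {A} (p q r : A -> bool) l :
  (forall x, In x l -> p x = true \/ q x = true \/ r x = true) ->
  length l <= length (filter p l) + length (filter q l) + length (filter r l).
Proof.
  induction l as [|a l IH]; intros H; simpl; [lia|].
  assert (Ha : p a = true \/ q a = true \/ r a = true) by (apply H; simpl; auto).
  assert (IH' := IH (fun x Hx => H x (or_intror Hx))).
  destruct (p a), (q a), (r a); simpl; try lia.
  all: destruct Ha as [?|[?|?]]; discriminate.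
Qed.

Definition dec (P : Prop) : bool := if excluded_middle_informative P then true else false.
Lemma dec_true P : dec P = true <-> P.
Proof. unfold dec. destruct (excluded_middle_informative P); split; auto; discriminate. Qed.
Lemma dec_t1 P : dec P = true -> P.
Proof. apply dec_true. Qed.
Lemma dec_t2 (P : Prop) : P -> dec P = true.
Proof. apply dec_true. Qed.

Lemma FOP_nth {A} (R : A -> A -> Prop) l d i j :
  ForallOrdPairs R l -> i < j -> j < length l -> R (nth i l d) (nth j l d).
Proof.
  intros Hf. revert i j. induction Hf; intros i j Hij Hj; simpl in *; [lia|].
  destruct i, j; try lia.
  - rewrite Forall_forall in H. apply H. apply nth_In. lia.
  - apply IHHf; lia.
Qed.

Lemma FOP_map_seq {A} (R : A -> A -> Prop) (f : nat -> A) s k :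
  (forall i j, s <= i -> i < j -> j < s + k -> R (f i) (f j)) ->
  ForallOrdPairs R (map f (seq s k)).
Proof.
  revert s. induction k; intros s H; simpl; constructor.
  - rewrite Forall_forall. intros x Hx. apply in_map_iff in Hx.
    destruct Hx as [j [<- Hj]]. apply in_seq in Hj. apply H; lia.
  - apply IHk. intros i j H1 H2 H3; apply H; lia.
Qed.

Definition copy_in (S : vset V -> Prop) h := forall i, i < n -> S (E h i).
Definition CC (S : vset V -> Prop) k := exists l : list G, length l = k /\
  (forall h, In h l -> copy_in S h) /\ ForallOrdPairs NO l.

Lemma CC_mono (S S' : vset V -> Prop) k : (forall P, S P -> S' P) -> CC S k -> CC S' k.
Proof.
  intros HS [l [H1 [H2 H3]]]. exists l; repeat split; auto.
  intros h Hh i Hi. apply HS, H2; auto.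
Qed.

Lemma seg_in_copy x y h : seg_in V adj x y (seg_act G V act h gam) <-> copy_in (I x y) h.
Proof.
  unfold seg_in, copy_in, I. split.
  - intros H i Hi. apply H, In_seg_act; eauto.
  - intros H P HP. apply In_seg_act in HP. destruct HP as [i [Hi ->]]; auto.
Qed.

Lemma bridge x y k : copies_count G V act adj gam x y k <-> CC (I x y) k.
Proof.
  split.
  - intros [f [H1 H2]]. exists (map f (seq 0 k)). split; [rewrite length_map, length_seq; auto|].
    split.
    + intros h Hh. apply in_map_iff in Hh. destruct Hh as [i [<- Hi]]. apply in_seq in Hi.
      apply seg_in_copy, H1; lia.
    + apply FOP_map_seq. intros i j _ Hij Hj; apply H2; lia.
  - intros [l [H1 [H2 H3]]]. exists (fun i => nth i l (gone G)). split.
    + intros i Hi. apply seg_in_copy, H2, nth_In; lia.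
    + intros i j Hij Hj. apply (FOP_nth NO); auto; lia.
Qed.


Lemma seg_act_rev h : seg_act G V act h (seg_rev V gam) = map (compl V) (rev (seg_act G V act h gam)).
Proof.
  unfold seg_act, seg_rev. rewrite map_map, <- map_rev, map_map.
  apply map_ext. intros; apply hs_act_compl.
Qed.

Lemma in_interval_compl x y P : in_interval V adj x y (compl V P) <-> in_interval V adj y x P.
Proof.
  unfold in_interval. rewrite hs_compl_iff. unfold compl. split.
  - intros [H1 [H2 H3]]. split; auto. split; auto. apply NNPP; auto.
  - intros [H1 [H2 H3]]. split; auto.
Qed.

Lemma seg_in_rev x y c : seg_in V adj x y (map (compl V) (rev c)) <-> seg_in V adj y x c.
Proof.
  unfold seg_in. split.
  - intros H P HP. apply in_interval_compl. apply H. apply in_map, in_rev. rewrite rev_involutive; auto.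
  - intros H P HP. apply in_map_iff in HP. destruct HP as [Q [<- HQ]].
    apply in_interval_compl. apply H. apply in_rev; auto.
Qed.

Lemma overlap_rev c1 c2 : overlap V (map (compl V) (rev c1)) (map (compl V) (rev c2)) <-> overlap V c1 c2.
Proof.
  unfold overlap. split.
  - intros [P [Q [HP [HQ H]]]]. apply in_map_iff in HP, HQ.
    destruct HP as [P0 [<- HP]], HQ as [Q0 [<- HQ]]. apply in_rev in HP, HQ.
    exists P0, Q0. split; auto. split; auto.
    unfold transverse in *. rewrite seteq_compl, nested_compl in H. auto.
  - intros [P [Q [HP [HQ H]]]]. exists (compl V P), (compl V Q).
    split; [apply in_map, in_rev; rewrite rev_involutive; auto|].
    split; [apply in_map, in_rev; rewrite rev_involutive; auto|].
    unfold transverse in *. rewrite seteq_compl, nested_compl. auto.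
Qed.

Lemma cc_rev x y k : copies_count G V act adj (seg_rev V gam) x y k <-> copies_count G V act adj gam y x k.
Proof.
  unfold copies_count. split; intros [f [H1 H2]]; exists f; split.
  - intros i Hi. rewrite <- seg_in_rev, <- seg_act_rev; auto.
  - intros i j Hij Hj. rewrite <- overlap_rev, <- !seg_act_rev; auto.
  - intros i Hi. rewrite seg_act_rev, seg_in_rev; auto.
  - intros i j Hij Hj. rewrite !seg_act_rev, overlap_rev; auto.
Qed.

Definition zin z h := forall i, i < n -> E h i z.
Definition zout z h := forall i, i < n -> ~ E h i z.

Lemma transition (Pr : nat -> Prop) k j : Pr k -> ~ Pr j -> k < j ->
  exists i, k <= i /\ i < j /\ Pr i /\ ~ Pr (S i).
Proof.
  induction j; intros H1 H2 H3; [lia|].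
  destruct (classic (Pr j)) as [Hj|Hj].
  - exists j; repeat split; auto; lia.
  - assert (k <> j) by (intro; subst; auto).
    destruct IHj as [i Hi]; auto; [lia|]. exists i; intuition lia.
Qed.

Lemma split_pt z h : ~ zin z h -> ~ zout z h ->
  exists i, S i < n /\ E h i z /\ ~ E h (S i) z.
Proof.
  intros H1 H2.
  assert (exists j, j < n /\ ~ E h j z) as [j [Hj Hjz]].
  { apply NNPP; intros Hn. apply H1. intros i Hi. apply NNPP; intros Hc; apply Hn; eauto. }
  assert (exists k, k < n /\ E h k z) as [k [Hk Hkz]].
  { apply NNPP; intros Hn. apply H2. intros i Hi Hc. apply Hn; eauto. }
  assert (k < j).
  { destruct (lt_eq_lt_dec k j) as [[?|?]|?]; auto; [subst; contradiction|].
    exfalso. apply Hjz. apply (E_mono h j k); auto. }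
  destruct (transition (fun i => E h i z) k j) as [i Hi]; auto.
  exists i; intuition lia.
Qed.

Lemma split_contra x y z h1 h2 : copy_in (I x y) h1 -> copy_in (I x y) h2 ->
  ~ zin z h1 -> ~ zout z h1 -> ~ zin z h2 -> ~ zout z h2 -> NO h1 h2 -> False.
Proof.
  intros C1 C2 A1 B1 A2 B2 HN.
  destruct (split_pt z h1) as [i [Hi [Hi1 Hi2]]]; auto.
  destruct (split_pt z h2) as [j [Hj [Hj1 Hj2]]]; auto.
  destruct (NO_elim h1 h2 i j) as [N1 S1]; auto; try lia.
  destruct (strict x y _ _ (C1 i ltac:(lia)) (C2 j ltac:(lia)) N1 S1) as [Hs|Hs].
  -
    destruct (NO_elim h1 h2 i (S j)) as [N2 S2]; auto; try lia.
    destruct (strict x y _ _ (C1 i ltac:(lia)) (C2 (S j) Hj) N2 S2) as [Ht|Ht].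
    + apply Hj2, (proj1 Ht); auto.
    + destruct (E_tight h2 j Hj) as [_ Hno]. apply Hno.
      exists (E h1 i). split; [apply E_hs; lia|]. auto.
  - destruct (NO_elim h1 h2 (S i) j) as [N2 S2]; auto; try lia.
    destruct (strict x y _ _ (C1 (S i) Hi) (C2 j ltac:(lia)) N2 S2) as [Ht|Ht].
    + destruct (E_tight h1 i Hi) as [_ Hno]. apply Hno.
      exists (E h2 j). split; [apply E_hs; lia|]. auto.
    + apply Hi2, (proj1 Ht); auto.
Qed.

Lemma Ulem x y z k : CC (I x y) k -> exists a b,
  CC (fun P => I x y P /\ P z) a /\ CC (fun P => I x y P /\ ~ P z) b /\ k <= a + b + 1.
Proof.
  intros [l [Hlen [Hin Hf]]].
  set (lA := filter (fun h => dec (zin z h)) l).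
  set (lB := filter (fun h => dec (zout z h)) l).
  set (lS := filter (fun h => dec (~ zin z h /\ ~ zout z h)) l).
  exists (length lA), (length lB). split; [|split].
  - exists lA. split; auto. split; [|apply FOP_filter; auto].
    intros h Hh. apply filter_In in Hh. destruct Hh as [Hh Hd]. apply dec_t1 in Hd.
    intros i Hi. split; [apply Hin; auto| apply Hd; auto].
  - exists lB. split; auto. split; [|apply FOP_filter; auto].
    intros h Hh. apply filter_In in Hh. destruct Hh as [Hh Hd]. apply dec_t1 in Hd.
    intros i Hi. split; [apply Hin; auto| apply Hd; auto].
  - assert (length lS <= 1).
    { apply (at_most_one NO); [|apply FOP_filter; auto].
      intros a b Ha Hb. apply filter_In in Ha, Hb.
      destruct Ha as [Ha Ha'], Hb as [Hb Hb']. apply dec_t1 in Ha', Hb'.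
      intros HN. eapply (split_contra x y z a b); try apply Hin; try tauto. }
    subst. assert (length l <= length lA + length lB + length lS); [|lia].
    apply len3. intros h _.
    destruct (classic (zin z h)); [left; apply dec_t2; auto|].
    destruct (classic (zout z h)); [right; left; apply dec_t2; auto|].
    right; right; apply dec_t2; auto.
Qed.


Lemma block x y a a' : copy_in (I x y) a -> copy_in (I x y) a' -> NO a a' ->
  (forall i j, i < n -> j < n -> ssubset V (E a i) (E a' j)) \/
  (forall i j, i < n -> j < n -> ssubset V (E a' j) (E a i)).
Proof.
  intros C1 C2 HN.
  set (R i j := ssubset V (E a i) (E a' j)).
  assert (Hdich : forall i j, i < n -> j < n -> R i j \/ ssubset V (E a' j) (E a i)).
  { intros i j Hi Hj. destruct (NO_elim a a' i j) as [N1 S1]; auto.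
    apply (strict x y); auto. }
  assert (HJ : forall i j, i < n -> S j < n -> (R i j <-> R i (S j))).
  { intros i j Hi Hj. split; intros H.
    - destruct (Hdich i (S j)) as [H'|H']; auto.
      exfalso. destruct (E_tight a' j Hj) as [_ Hno]. apply Hno.
      exists (E a i). split; [apply E_hs; auto|]. auto.
    - apply ssubset_trans with (E a' (S j)); auto. apply E_tight; auto. }
  assert (HI : forall i j, S i < n -> j < n -> (R i j <-> R (S i) j)).
  { intros i j Hi Hj. split; intros H.
    - apply ssubset_trans with (E a i); auto. apply E_tight; auto.
    - destruct (Hdich i j) as [H'|H']; auto; try lia.
      exfalso. destruct (E_tight a i Hi) as [_ Hno]. apply Hno.
      exists (E a' j). split; [apply E_hs; auto|]. auto. }
  assert (Hall : forall i j, i < n -> j < n -> (R i j <-> R 0 0)).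
  { intros i j Hi' Hj'.
    assert (A1 : forall j, j < n -> (R i j <-> R i 0)).
    { induction j0; intros; [tauto|]. rewrite <- HJ; auto; try lia. apply IHj0; lia. }
    assert (A2 : forall i, i < n -> (R i 0 <-> R 0 0)).
    { induction i0; intros; [tauto|]. rewrite <- HI; auto; try lia. apply IHi0; lia. }
    rewrite A1, A2; auto; tauto. }
  destruct (classic (R 0 0)) as [H0|H0].
  - left. intros i j Hi' Hj'. apply (Hall i j); auto.
  - right. intros i j Hi' Hj'. destruct (Hdich i j) as [H|H]; auto.
    exfalso; apply H0, (Hall i j); auto.
Qed.

Lemma L1 x y z a b a' : copy_in (fun P => I x y P /\ P z) a -> copy_in (fun P => I x y P /\ ~ P z) b ->
  overlap V (seg_act G V act a gam) (seg_act G V act b gam) ->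
  copy_in (fun P => I x y P /\ P z) a' -> NO a a' ->
  exists s t, s < n /\ t < n /\ ssubset V (E a s) (E a' t).
Proof.
  intros Ca Cb Ho Ca' HN.
  destruct (overlap_elim a b Ho) as [s [t [Hs [Ht [Heq|Htr]]]]].
  - exfalso. destruct Heq as [H1 _]. apply (proj2 (Cb t Ht)), H1, (Ca s Hs).
  - destruct (lt_eq_lt_dec s t) as [[Hlt|Heq]|Hgt].
    + exfalso. apply Htr.
      destruct (comparable x y (E a s) (E b s) (proj1 (Ca s Hs)) (proj1 (Cb s ltac:(lia))) (orbit a b s Hs)) as [Hc|Hc].
      * exfalso. apply (proj2 (Cb s ltac:(lia))), Hc, (Ca s Hs).
      * apply nested_of_subset. intros v Hv. apply Hc. apply (E_mono b s t); auto.
    + subst. exfalso. apply Htr, orbit; auto.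
    + exists s, t. split; auto. split; auto.
      destruct (NO_elim a a' s t) as [N1 S1]; auto.
      destruct (strict x y _ _ (proj1 (Ca s Hs)) (proj1 (Ca' t Ht)) N1 S1) as [H|H]; auto.
      exfalso. apply Htr.
      destruct (comparable x y (E b t) (E a' t) (proj1 (Cb t Ht)) (proj1 (Ca' t Ht)) (orbit b a' t Ht)) as [Hc|Hc].
      * apply nested_of_subset. intros v Hv. apply (proj1 H), Hc; auto.
      * exfalso. apply (proj2 (Cb t Ht)), Hc, (Ca' t Ht).
Qed.

Lemma L_contra x y z a a' b b' :
  copy_in (fun P => I x y P /\ P z) a -> copy_in (fun P => I x y P /\ P z) a' ->
  copy_in (fun P => I x y P /\ ~ P z) b -> copy_in (fun P => I x y P /\ ~ P z) b' ->
  NO a a' -> ~ NO a b -> ~ NO a' b' -> False.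
Proof.
  intros Ca Ca' Cb Cb' HN H1 H2.
  apply NNPP in H1, H2.
  destruct (L1 x y z a b a') as [s [t [Hs [Ht H]]]]; auto.
  destruct (L1 x y z a' b' a) as [s' [t' [Hs' [Ht' H']]]]; auto. apply NO_sym; auto.
  assert (Ia : copy_in (I x y) a) by (intros i Hi; apply Ca; auto).
  assert (Ia' : copy_in (I x y) a') by (intros i Hi; apply Ca'; auto).
  destruct (block x y a a' Ia Ia' HN) as [B|B].
  - apply (ssubset_asym _ _ H'). apply B; auto.
  - apply (ssubset_asym _ _ H). apply B; auto.
Qed.

Lemma Llem x y z a b : CC (fun P => I x y P /\ P z) a -> CC (fun P => I x y P /\ ~ P z) b ->
  exists k, CC (I x y) k /\ a + b <= k + 1.
Proof.
  intros [lA [HlA [HinA HfA]]] [lB [HlB [HinB HfB]]].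
  set (bad h := exists h', In h' lB /\ ~ NO h h').
  set (Good := filter (fun h => dec (~ bad h)) lA).
  set (Bad := filter (fun h => dec (bad h)) lA).
  exists (length (Good ++ lB)). split.
  - exists (Good ++ lB). split; auto. split.
    + intros h Hh. apply in_app_or in Hh. destruct Hh as [Hh|Hh].
      * apply filter_In in Hh. intros i Hi. apply HinA; tauto.
      * intros i Hi. apply HinB; auto.
    + apply FOP_app; [apply FOP_filter; auto | auto |].
      intros h h' Hh Hh'. apply filter_In in Hh. destruct Hh as [_ Hd]. apply dec_t1 in Hd.
      apply NNPP. intros Hn. apply Hd. exists h'; auto.
  - rewrite length_app.
    assert (length Bad <= 1).
    { apply (at_most_one NO); [|apply FOP_filter; auto].
      intros h1 h2 Hh1 Hh2 HN. apply filter_In in Hh1, Hh2.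
      destruct Hh1 as [Hh1 Hd1], Hh2 as [Hh2 Hd2]. apply dec_t1 in Hd1, Hd2.
      destruct Hd1 as [b1 [Hb1 Hn1]], Hd2 as [b2 [Hb2 Hn2]].
      apply (L_contra x y z h1 h2 b1 b2); auto. }
    assert (length lA <= length Good + length Bad + length (filter (fun _ => false) lA)).
    { apply len3. intros h _. destruct (classic (bad h)).
      - right; left; apply dec_t2; auto.
      - left; apply dec_t2; auto. }
    assert (length (filter (fun _ : G => false) lA) = 0).
    { clear. induction lA; simpl; auto. }
    lia.
Qed.


Definition isCC p q c := CC (I p q) c /\ forall m, CC (I p q) m -> m <= c.

Lemma tri x y z cxy cyz czx cyx czy cxz :
  isCC x y cxy -> isCC y z cyz -> isCC z x czx ->
  isCC y x cyx -> isCC z y czy -> isCC x z cxz ->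
  cxy + cyz + czx <= cyx + czy + cxz + 6.
Proof.
  intros [Hxy _] [Hyz _] [Hzx _] [_ Myx] [_ Mzy] [_ Mxz].
  destruct (Ulem x y z cxy Hxy) as [a1 [b1 [A1 [B1 E1]]]].
  destruct (Ulem y z x cyz Hyz) as [a2 [b2 [A2 [B2 E2]]]].
  destruct (Ulem z x y czx Hzx) as [a3 [b3 [A3 [B3 E3]]]].
  unfold I, in_interval in *.
  destruct (Llem y x z a2 b3) as [k1 [K1 F1]].
  { revert A2; apply CC_mono; unfold I, in_interval; tauto. }
  { revert B3; apply CC_mono; unfold I, in_interval; tauto. }
  destruct (Llem z y x a3 b1) as [k2 [K2 F2]].
  { revert A3; apply CC_mono; unfold I, in_interval; tauto. }
  { revert B1; apply CC_mono; unfold I, in_interval; tauto. }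
  destruct (Llem x z y a1 b2) as [k3 [K3 F3]].
  { revert A1; apply CC_mono; unfold I, in_interval; tauto. }
  { revert B2; apply CC_mono; unfold I, in_interval; tauto. }
  apply Myx in K1. apply Mzy in K2. apply Mxz in K3. lia.
Qed.

Lemma isc_fwd x y c : is_c act adj gam x y c -> isCC x y c.
Proof.
  intros [H1 H2]. split; [apply bridge; auto|]. intros m Hm. apply H2, bridge; auto.
Qed.

Lemma isc_rev x y c : is_c act adj (seg_rev V gam) x y c -> isCC y x c.
Proof.
  intros [H1 H2]. split; [apply bridge, cc_rev; auto|]. intros m Hm. apply H2, cc_rev, bridge; auto.
Qed.

Lemma main_in (x y z : V) (cxy cyx' cyz czy' czx cxz' : nat) :
  is_c act adj gam x y cxy -> is_c act adj (seg_rev V gam) x y cyx' ->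
  is_c act adj gam y z cyz -> is_c act adj (seg_rev V gam) y z czy' ->
  is_c act adj gam z x czx -> is_c act adj (seg_rev V gam) z x cxz' ->
  (Z.abs ((Z.of_nat cxy - Z.of_nat cyx') + (Z.of_nat cyz - Z.of_nat czy')
          + (Z.of_nat czx - Z.of_nat cxz')) <= 6)%Z.
Proof.
  intros H1 H2 H3 H4 H5 H6.
  apply isc_fwd in H1, H3, H5. apply isc_rev in H2, H4, H6.
  assert (T1 := tri x y z _ _ _ _ _ _ H1 H3 H5 H2 H4 H6).
  assert (T2 := tri x z y _ _ _ _ _ _ H6 H4 H2 H5 H3 H1).
  lia.
Qed.

End Main.

Theorem lemma4p7 (V : Type) (adj : V -> V -> Prop) (G : group) (act : G -> V -> V)
  (HX : median_graph V adj)
  (Hact : action_by_automorphisms G V adj act)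
  (Hnt : non_transverse act adj)
  (gam : list (vset V)) (Hgam : is_segment V adj gam)
  (x y z : V) (cxy cyx' cyz czy' czx cxz' : nat) :
  is_c act adj gam x y cxy -> is_c act adj (seg_rev V gam) x y cyx' ->
  is_c act adj gam y z cyz -> is_c act adj (seg_rev V gam) y z czy' ->
  is_c act adj gam z x czx -> is_c act adj (seg_rev V gam) z x cxz' ->
  (Z.abs ((Z.of_nat cxy - Z.of_nat cyx') + (Z.of_nat cyz - Z.of_nat czy')
          + (Z.of_nat czx - Z.of_nat cxz')) <= 6)%Z.
Proof.
  exact (main_in V adj G act HX Hact Hnt gam Hgam x y z cxy cyx' cyz czy' czx cxz').
Qed.
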